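(* Let $\Omega$ be a planar triangle mesh with vertices $w_1,\dots,w_n\in\mathbb{C}$ and face set $\mathcal{F}$, and let $\mu$ be a piecewise constant Beltrami coefficient on $\Omega$, i.e. $\mu|_T=\mu_T=\rho_T+i\tau_T\in\mathbb{C}$ with $|\mu_T|<1$ for every face $T\in\mathcal{F}$. For $u,v\in\mathbb{R}^n$ define the discrete least-squares quasi-conformal energy $$E_{QC}^{\mu}(u,v)=\frac12\sum_{T\in\mathcal{F}}\operatorname{Area}(T)\,\big\|P_T\nabla u|_T+JP_T\nabla v|_T\big\|^2 .$$ Then the solution of the equation $E_{QC}^{\mu}(u,v)=0$ is unique up to scaling, rotation and translation: there exists $f_0\in\mathbb{C}^n$ such that, identifying $(u,v)$ with $f=u+iv\in\mathbb{C}^n$ (where $f_j=u_j+iv_j$ is the image of $w_j$), the set of all solutions is exactly $\{a f_0+b\mathbf{1}: a,b\in\mathbb{C}\}$, where $\mathbf{1}=(1,\dots,1)^T$.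
   Context: The mesh $\Omega$ is a connected triangulated planar domain whose faces are nondegenerate, consistently (positively) oriented triangles. A vector $u\in\mathbb{R}^n$ is identified with the continuous function on $\Omega$ that is linear on each face and takes value $u_j$ at $w_j$; on a face $T$ this function has constant gradient $\nabla u|_T\in\mathbb{R}^2$ (explicitly, if $T=[w_0^T,w_1^T,w_2^T]$ with values $u_0,u_1,u_2$, then $\nabla u|_T=\frac{1}{2\operatorname{Area}(T)}\begin{pmatrix}0&-1\\1&0\end{pmatrix}\sum_{i=0}^2u_i(w^T_{i+2}-w^T_{i+1})$ with indices mod 3 and points of $\mathbb{C}$ viewed as vectors in $\mathbb{R}^2$); similarly for $v$. On each face, $$P_T=\frac{1}{\sqrt{1-|\mu_T|^2}}\begin{pmatrix}1-\rho_T&-\tau_T\\-\tau_T&1+\rho_T\end{pmatrix},\qquad J=\begin{pmatrix}0&-1\\1&0\end{pmatrix}.$$ Vanishing of this energy is the discrete form of the Beltrami equation $f_{\bar z}=\mu f_z$ for the piecewise linear map $f=u+iv$. *)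

(* Defs.v *)
From HB Require Import structures.
From mathcomp Require Import all_boot all_order all_algebra.
From mathcomp Require Import complex.
Set Implicit Arguments. Unset Strict Implicit. Unset Printing Implicit Defensive.
Import Order.TTheory GRing.Theory Num.Theory.
Local Open Scope ring_scope.

Section Mesh.
Variables (R : rcfType) (n m : nat).
(* vertices w_j and faces T_t = [w_{F t 0}, w_{F t 1}, w_{F t 2}] *)
Variables (w : 'I_n -> R[i]) (F : 'I_m -> 'I_3 -> 'I_n).

(* the vertex of face t with local index k (indices taken mod 3) *)
Definition fvert (t : 'I_m) (k : nat) : R[i] := w (F t (inZp k)).

Definition signed_area (t : 'I_m) : R :=
  (complex.Re (fvert t 1 - fvert t 0) * complex.Im (fvert t 2 - fvert t 0)
   - complex.Im (fvert t 1 - fvert t 0) * complex.Re (fvert t 2 - fvert t 0)) / 2.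

Definition vecC (z : R[i]) : 'cV[R]_2 :=
  \col_(j < 2) (if j == ord0 then complex.Re z else complex.Im z).

Definition Jmx : 'M[R]_2 :=
  \matrix_(i < 2, j < 2)
    (if (i == ord0) && (j == ord0) then 0
     else if i == ord0 then -1
     else if j == ord0 then 1 else 0).

(* gradient of the piecewise linear interpolant of u on face t *)
Definition grad (u : 'I_n -> R) (t : 'I_m) : 'cV[R]_2 :=
  (2 * signed_area t)^-1 *:
    (Jmx *m \sum_(k < 3) u (F t k) *: vecC (fvert t (k + 2) - fvert t (k + 1))).

Definition Pmx (muT : R[i]) : 'M[R]_2 :=
  (Num.sqrt (1 - (complex.Re muT ^+ 2 + complex.Im muT ^+ 2)))^-1 *:
  \matrix_(i < 2, j < 2)
    (if (i == ord0) && (j == ord0) then 1 - complex.Re muT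
     else if (i != ord0) && (j != ord0) then 1 + complex.Re muT
     else - complex.Im muT).

Definition sqnorm2 (x : 'cV[R]_2) : R := \sum_(j < 2) x j ord0 ^+ 2.

Definition E_QC (mu : 'I_m -> R[i]) (u v : 'I_n -> R) : R :=
  2^-1 * \sum_(t < m) signed_area t *
     sqnorm2 (Pmx (mu t) *m grad u t + Jmx *m (Pmx (mu t) *m grad v t)).

Definition edge_adj : rel 'I_m := fun t1 t2 =>
  [exists i1 : 'I_3, exists i2 : 'I_3, exists j1 : 'I_3, exists j2 : 'I_3,
     [&& i1 != i2, F t1 i1 == F t2 j1 & F t1 i2 == F t2 j2]].

Definition in_open_face (t : 'I_m) (p : R[i]) : Prop :=
  exists lam : 'I_3 -> R, (forall k, 0 < lam k) /\ \sum_(k < 3) lam k = 1 /\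
    p = \sum_(k < 3) (lam k)%:C%C * w (F t k).

Definition planar_mesh : Prop :=
  injective w /\
  (forall t, 0 < signed_area t) /\
  (forall j : 'I_n, exists t k, F t k = j) /\
  (forall t1 t2, t1 != t2 -> forall p, ~ (in_open_face t1 p /\ in_open_face t2 p)) /\
  (forall t1 t2, connect edge_adj t1 t2).

End Mesh.

(* Main.v *)
Require Import Defs.
From HB Require Import structures.
From mathcomp Require Import all_boot all_order all_algebra.
From mathcomp Require Import complex.
From mathcomp Require Import ring lra.
Import Order.TTheory GRing.Theory Num.Theory.
Set Implicit Arguments. Unset Strict Implicit. Unset Printing Implicit Defensive.
Local Open Scope ring_scope.

Section S.
Variables (R : rcfType) (n m : nat) (w : 'I_n -> R[i]) (F : 'I_m -> 'I_3 -> 'I_n).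

Definition xc (t : 'I_m) (k : nat) : R := complex.Re (fvert w F t k).
Definition yc (t : 'I_m) (k : nat) : R := complex.Im (fvert w F t k).
Definition Dt (t : 'I_m) : R := (xc t 1 - xc t 0) * (yc t 2 - yc t 0) - (yc t 1 - yc t 0) * (xc t 2 - xc t 0).
Definition vl (a : 'I_n -> R) (t : 'I_m) (k : nat) : R := a (F t (inZp k)).
Definition Sx t a := vl a t 0 * (xc t 2 - xc t 1) + vl a t 1 * (xc t 0 - xc t 2) + vl a t 2 * (xc t 1 - xc t 0).
Definition Sy t a := vl a t 0 * (yc t 2 - yc t 1) + vl a t 1 * (yc t 0 - yc t 2) + vl a t 2 * (yc t 1 - yc t 0).
Definition gx t a := - Sy t a / Dt t.
Definition gy t a := Sx t a / Dt t.

Lemma fvert3 t : fvert w F t 3 = fvert w F t 0.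
Proof. by rewrite /fvert; congr (w (F t _)); apply/val_inj. Qed.
Lemma fvert4 t : fvert w F t 4 = fvert w F t 1.
Proof. by rewrite /fvert; congr (w (F t _)); apply/val_inj. Qed.

Lemma wid0 : widen_ord (leqnSn 1) (@ord_max 0) = ord0 :> 'I_2.
Proof. exact/val_inj. Qed.

Lemma Jmx0 (x : 'cV[R]_2) : (Jmx R *m x) ord0 ord0 = - x ord_max ord0.
Proof. by rewrite !mxE !big_ord_recr big_ord0 /= !mxE /= wid0 /=; rewrite ?mul0r ?mul1r ?add0r ?addr0 ?mulN1r. Qed.
Lemma Jmx1 (x : 'cV[R]_2) : (Jmx R *m x) ord_max ord0 = x ord0 ord0.
Proof. by rewrite !mxE !big_ord_recr big_ord0 /= !mxE /= wid0 /=; rewrite ?mul0r ?mul1r ?add0r ?addr0 ?mulN1r. Qed.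

Lemma grad0 a t : grad w F a t ord0 ord0 = gx t a.
Proof.
rewrite /grad mxE Jmx0 summxE !big_ord_recr big_ord0 /= !mxE /=.
rewrite fvert3 fvert4 /gx /Sy /vl /yc /signed_area.
rewrite (_ : widen_ord _ (widen_ord _ ord_max) = inZp 0); last exact/val_inj.
rewrite (_ : widen_ord _ (ord_max : 'I_2) = inZp 1); last exact/val_inj.
rewrite (_ : (ord_max : 'I_3) = inZp 2); last exact/val_inj.
rewrite !add0n (_ : (1+1)%N = 2%N) // !raddfB /=.
rewrite [2 * _]mulrC divfK ?pnatr_eq0 //.
rewrite /Dt /xc /yc; ring.

Qed.

Lemma grad1 a t : grad w F a t ord_max ord0 = gy t a.
Proof.
rewrite /grad mxE Jmx1 summxE !big_ord_recr big_ord0 /= !mxE /=.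
rewrite fvert3 fvert4 /gy /Sx /vl /xc /signed_area.
rewrite (_ : widen_ord _ (widen_ord _ ord_max) = inZp 0); last exact/val_inj.
rewrite (_ : widen_ord _ (ord_max : 'I_2) = inZp 1); last exact/val_inj.
rewrite (_ : (ord_max : 'I_3) = inZp 2); last exact/val_inj.
rewrite !add0n (_ : (1+1)%N = 2%N) // !raddfB /=.
rewrite [2 * _]mulrC divfK ?pnatr_eq0 //.
rewrite /Dt /xc /yc; ring.

Qed.

End S.
Section S2.
Variables (R : rcfType) (n m : nat) (w : 'I_n -> R[i]) (F : 'I_m -> 'I_3 -> 'I_n).
Variable (mu : 'I_m -> R[i]).

Definition cP (z : R[i]) : R := (Num.sqrt (1 - (complex.Re z ^+ 2 + complex.Im z ^+ 2)))^-1.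
Definition PG0 (z : R[i]) (g0 g1 : R) : R := cP z * ((1 - complex.Re z) * g0 - complex.Im z * g1).
Definition PG1 (z : R[i]) (g0 g1 : R) : R := cP z * (- complex.Im z * g0 + (1 + complex.Re z) * g1).

Lemma Pmx0 z (x : 'cV[R]_2) : (Pmx z *m x) ord0 ord0 = PG0 z (x ord0 ord0) (x ord_max ord0).
Proof.
rewrite /Pmx -scalemxAl mxE !mxE !big_ord_recr big_ord0 /= !mxE /= wid0 /= /PG0 add0r.
congr (_ * _); ring.
Qed.
Lemma Pmx1 z (x : 'cV[R]_2) : (Pmx z *m x) ord_max ord0 = PG1 z (x ord0 ord0) (x ord_max ord0).
Proof.
rewrite /Pmx -scalemxAl mxE !mxE !big_ord_recr big_ord0 /= !mxE /= wid0 /= /PG1 add0r.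
congr (_ * _); ring.
Qed.

Definition X0 t u v := PG0 (mu t) (gx w F t u) (gy w F t u) - PG1 (mu t) (gx w F t v) (gy w F t v).
Definition X1 t u v := PG1 (mu t) (gx w F t u) (gy w F t u) + PG0 (mu t) (gx w F t v) (gy w F t v).

Lemma E_QCE u v : E_QC w F mu u v = 2^-1 * \sum_(t < m) signed_area w F t * (X0 t u v ^+ 2 + X1 t u v ^+ 2).
Proof.
congr (_ * _); apply: eq_bigr => t _; congr (_ * _).
rewrite /sqnorm2 !big_ord_recr big_ord0 /= wid0 add0r.
have hadd : forall (A B : 'cV[R]_2) i, (A + B) i ord0 = A i ord0 + B i ord0 by move=> *; rewrite mxE.
rewrite !hadd Jmx0 Jmx1 !Pmx0 !Pmx1 !grad0 !grad1 /X0 /X1.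
congr (_ + _); congr (_ ^+ 2); ring.
Qed.

Lemma E_QC0 u v : (forall t, 0 < signed_area w F t) ->
  (E_QC w F mu u v = 0 <-> forall t, X0 t u v = 0 /\ X1 t u v = 0).
Proof.
move=> hA; rewrite E_QCE; split.
  move/eqP; rewrite mulf_eq0 invr_eq0 pnatr_eq0 /= => /eqP h t.
  have h0 : forall t, true -> 0 <= signed_area w F t * (X0 t u v ^+ 2 + X1 t u v ^+ 2).
    by move=> t' _; apply: mulr_ge0; [exact: ltW | apply: addr_ge0; apply: sqr_ge0].
  have := psumr_eq0P h0 h; move=> /(_ t isT).
  move=> /eqP; rewrite mulf_eq0 (gt_eqF (hA t)) /=.
  rewrite paddr_eq0 ?sqr_ge0 // !sqrf_eq0 => /andP [/eqP -> /eqP ->] //.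
move=> h; rewrite big1 ?mulr0 // => t _.
by case: (h t) => -> ->; rewrite expr0n /= addr0 mulr0.
Qed.

Lemma mu_bound (z : R[i]) : `|z| < 1 -> 0 < 1 - (complex.Re z ^+ 2 + complex.Im z ^+ 2).
Proof.
rewrite normc_def.
have -> : (1 : R[i]) = ((1 : R)%:C)%C by [].
rewrite ltcR -{1}sqrtr1 ltr_sqrt ?ltr01 //.
by rewrite subr_gt0.
Qed.
End S2.

Section Core.
Variable R : rcfType.

Lemma solve2 (c r s g0 g1 : R) : c != 0 -> 1 - (r ^+ 2 + s ^+ 2) != 0 ->
  c * ((1 - r) * g0 - s * g1) = 0 -> c * (- s * g0 + (1 + r) * g1) = 0 -> g0 = 0 /\ g1 = 0.
Proof.
move=> hc hd /eqP; rewrite mulf_eq0 (negbTE hc) /= => /eqP hA.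
move/eqP; rewrite mulf_eq0 (negbTE hc) /= => /eqP hB.
have e0 : (1 - (r ^+ 2 + s ^+ 2)) * g0 = (1 + r) * ((1 - r) * g0 - s * g1) + s * (- s * g0 + (1 + r) * g1) by ring.
have e1 : (1 - (r ^+ 2 + s ^+ 2)) * g1 = s * ((1 - r) * g0 - s * g1) + (1 - r) * (- s * g0 + (1 + r) * g1) by ring.
rewrite hA hB !mulr0 addr0 in e0 e1.
by move/eqP: e0 e1; rewrite mulf_eq0 (negbTE hd) /= => /eqP -> /eqP; rewrite mulf_eq0 (negbTE hd) /= => /eqP ->.
Qed.

Lemma core2D (c r s e0 e1 gu0 gu1 gv0 gv1 : R) : c != 0 -> 0 < 1 - (r ^+ 2 + s ^+ 2) ->
  (e0 != 0) || (e1 != 0) -> e0 * gu0 + e1 * gu1 = 0 -> e0 * gv0 + e1 * gv1 = 0 ->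
  c * ((1 - r) * gu0 - s * gu1) - c * (- s * gv0 + (1 + r) * gv1) = 0 ->
  c * (- s * gu0 + (1 + r) * gu1) + c * ((1 - r) * gv0 - s * gv1) = 0 ->
  [/\ gu0 = 0, gu1 = 0, gv0 = 0 & gv1 = 0].
Proof.
move=> hc hd he hu hv hX0 hX1.
have hd' : 1 - (r ^+ 2 + s ^+ 2) != 0 by rewrite gt_eqF.
have cr : gu0 * gv1 - gu1 * gv0 = 0.
  have h1 : e0 * (gu0 * gv1 - gu1 * gv0) = gv1 * (e0 * gu0 + e1 * gu1) - gu1 * (e0 * gv0 + e1 * gv1) by ring.
  have h2 : e1 * (gu0 * gv1 - gu1 * gv0) = gu0 * (e0 * gv0 + e1 * gv1) - gv0 * (e0 * gu0 + e1 * gu1) by ring.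
  rewrite hu hv !mulr0 subr0 in h1 h2.
  case/orP: he => he.
    by move/eqP: h1; rewrite mulf_eq0 (negbTE he) /= => /eqP.
  by move/eqP: h2; rewrite mulf_eq0 (negbTE he) /= => /eqP.
set pu0 := c * ((1 - r) * gu0 - s * gu1) in hX0.
set pu1 := c * (- s * gu0 + (1 + r) * gu1) in hX1.
set pv0 := c * ((1 - r) * gv0 - s * gv1) in hX1.
set pv1 := c * (- s * gv0 + (1 + r) * gv1) in hX0.
have hc2 : pu0 * pv1 - pu1 * pv0 = c ^+ 2 * (1 - (r ^+ 2 + s ^+ 2)) * (gu0 * gv1 - gu1 * gv0) by rewrite /pu0 /pu1 /pv0 /pv1; ring.
rewrite cr mulr0 in hc2.
have e0' : pu0 = pv1 by apply/eqP; rewrite -subr_eq0 hX0.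
have e1' : pu1 = - pv0 by apply/eqP; rewrite -subr_eq0 opprK hX1.
rewrite e0' e1' mulNr opprK -!expr2 in hc2.
move/eqP: hc2; rewrite paddr_eq0 ?sqr_ge0 // !sqrf_eq0 => /andP [/eqP hv1 /eqP hv0].
have [g0 g1] := solve2 hc hd' hv0 hv1.
have hu0 : pu0 = 0 by rewrite e0' hv1.
have hu1 : pu1 = 0 by rewrite e1' hv0 oppr0.
have [g2 g3] := solve2 hc hd' hu0 hu1.
by split.
Qed.
End Core.

Section S3.
Variables (R : rcfType) (n m : nat) (w : 'I_n -> R[i]) (F : 'I_m -> 'I_3 -> 'I_n).

Lemma sa_Dt t : signed_area w F t = Dt w F t / 2.
Proof. by rewrite /signed_area /Dt /xc /yc !raddfB. Qed.

Lemma FinZp t (j : 'I_3) : F t (inZp j) = F t j.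
Proof. by rewrite valZpK. Qed.

Lemma gp (a : 'I_n -> R) t (j : 'I_3) : Dt w F t != 0 ->
  (xc w F t j - xc w F t 0) * gx w F t a + (yc w F t j - yc w F t 0) * gy w F t a
  = a (F t j) - vl F a t 0.
Proof.
move=> hD; rewrite -FinZp.
case: j => [[|[|[|//]]] p] /=; rewrite /gx /gy /Sx /Sy /vl; move: hD; rewrite /Dt => hD.
- by rewrite !subrr; ring.
- by field.
- by field.
Qed.

Lemma e_nz t (j1 j2 : 'I_3) : Dt w F t != 0 -> val j1 != val j2 ->
  (xc w F t j2 - xc w F t j1 != 0) || (yc w F t j2 - yc w F t j1 != 0).
Proof.
rewrite /Dt => hD hne; rewrite -negb_and; apply/negP => /andP [/eqP h1 /eqP h2].
move/eqP: hD; apply.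
case: j1 h1 h2 hne => [[|[|[|//]]] p1]; case: j2 => [[|[|[|//]]] p2] //= h1 h2 _.
- have -> : xc w F t 1 = xc w F t 0 by apply/eqP; rewrite -subr_eq0 h1.
  have -> : yc w F t 1 = yc w F t 0 by apply/eqP; rewrite -subr_eq0 h2.
  by ring.
- have -> : xc w F t 2 = xc w F t 0 by apply/eqP; rewrite -subr_eq0 h1.
  have -> : yc w F t 2 = yc w F t 0 by apply/eqP; rewrite -subr_eq0 h2.
  by ring.
- have -> : xc w F t 0 = xc w F t 1 by apply/eqP; rewrite -subr_eq0 h1.
  have -> : yc w F t 0 = yc w F t 1 by apply/eqP; rewrite -subr_eq0 h2.
  by ring.
- have -> : xc w F t 2 = xc w F t 1 by apply/eqP; rewrite -subr_eq0 h1.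
  have -> : yc w F t 2 = yc w F t 1 by apply/eqP; rewrite -subr_eq0 h2.
  by ring.
- have -> : xc w F t 0 = xc w F t 2 by apply/eqP; rewrite -subr_eq0 h1.
  have -> : yc w F t 0 = yc w F t 2 by apply/eqP; rewrite -subr_eq0 h2.
  by ring.
- have -> : xc w F t 1 = xc w F t 2 by apply/eqP; rewrite -subr_eq0 h1.
  have -> : yc w F t 1 = yc w F t 2 by apply/eqP; rewrite -subr_eq0 h2.
  by ring.
Qed.

Lemma Dt_nz t : 0 < signed_area w F t -> Dt w F t != 0.
Proof.
rewrite sa_Dt => h; apply/eqP => h0; move: h; rewrite h0 mul0r; by rewrite ltxx.
Qed.

Lemma F_inj t (j1 j2 : 'I_3) : 0 < signed_area w F t -> F t j1 = F t j2 -> j1 = j2.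
Proof.
move=> /Dt_nz hD hF; apply/val_inj/eqP; apply/negPn/negP => hne.
have := e_nz hD hne.
by rewrite /xc /yc /fvert !FinZp hF !subrr eqxx.
Qed.

Lemma gx_lin t (c f1 f2 f3 : 'I_n -> R) (a1 a2 : R) :
  (forall j, c j = a1 * f1 j + a2 * f2 j + f3 j) ->
  gx w F t c = a1 * gx w F t f1 + a2 * gx w F t f2 + gx w F t f3 /\
  gy w F t c = a1 * gy w F t f1 + a2 * gy w F t f2 + gy w F t f3.
Proof. by move=> h; rewrite /gx /gy /Sx /Sy /vl !h; split; ring. Qed.

Lemma gx_const t (c : 'I_n -> R) z : (forall j, c j = z) -> gx w F t c = 0 /\ gy w F t c = 0.
Proof. by move=> h; rewrite /gx /gy /Sx /Sy /vl !h; split; ring. Qed.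

End S3.

Section S4.
Variables (R : rcfType) (n m : nat) (w : 'I_n -> R[i]) (F : 'I_m -> 'I_3 -> 'I_n).
Variable (mu : 'I_m -> R[i]).

Definition solUV (u v : 'I_n -> R) := forall t, X0 w F mu t u v = 0 /\ X1 w F mu t u v = 0.
Definition sol (f : 'I_n -> R[i]) := solUV (fun j => complex.Re (f j)) (fun j => complex.Im (f j)).

Lemma gx_ext t (c d : 'I_n -> R) : (forall j, c j = d j) -> gx w F t c = gx w F t d /\ gy w F t c = gy w F t d.
Proof. by move=> h; rewrite /gx /gy /Sx /Sy /vl !h. Qed.

Lemma solUV_ext u v u' v' : (forall j, u j = u' j) -> (forall j, v j = v' j) -> solUV u v -> solUV u' v'.
Proof.
move=> hu hv hs t; have [h0 h1] := hs t.
have [e1 e2] := gx_ext t hu; have [e3 e4] := gx_ext t hv.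
by rewrite /X0 /X1 -e1 -e2 -e3 -e4.
Qed.

Lemma cplx_ext (x y : R[i]) : complex.Re x = complex.Re y -> complex.Im x = complex.Im y -> x = y.
Proof. by case: x => a b; case: y => c d /= -> ->. Qed.

Lemma sol_ext f f' : (forall j, f j = f' j) -> sol f -> sol f'.
Proof. by move=> h; apply: solUV_ext => j; rewrite h. Qed.

Lemma X0_lin z (gu0 gu1 gv0 gv1 hu0 hu1 hv0 hv1 al be : R) :
  PG0 z (al * gu0 + (- be) * gv0 + hu0) (al * gu1 + (- be) * gv1 + hu1)
  - PG1 z (be * gu0 + al * gv0 + hv0) (be * gu1 + al * gv1 + hv1)
  = al * (PG0 z gu0 gu1 - PG1 z gv0 gv1) - be * (PG1 z gu0 gu1 + PG0 z gv0 gv1)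
    + (PG0 z hu0 hu1 - PG1 z hv0 hv1).
Proof. rewrite /PG0 /PG1; ring. Qed.

Lemma X1_lin z (gu0 gu1 gv0 gv1 hu0 hu1 hv0 hv1 al be : R) :
  PG1 z (al * gu0 + (- be) * gv0 + hu0) (al * gu1 + (- be) * gv1 + hu1)
  + PG0 z (be * gu0 + al * gv0 + hv0) (be * gu1 + al * gv1 + hv1)
  = al * (PG1 z gu0 gu1 + PG0 z gv0 gv1) + be * (PG0 z gu0 gu1 - PG1 z gv0 gv1)
    + (PG1 z hu0 hu1 + PG0 z hv0 hv1).
Proof. rewrite /PG0 /PG1; ring. Qed.

Lemma ReMD (a x y : R[i]) : complex.Re (a * x + y) =
   complex.Re a * complex.Re x + (- complex.Im a) * complex.Im x + complex.Re y.
Proof. by case: a => ? ?; case: x => ? ?; case: y => ? ? /=; ring. Qed.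
Lemma ImMD (a x y : R[i]) : complex.Im (a * x + y) =
   complex.Im a * complex.Re x + complex.Re a * complex.Im x + complex.Im y.
Proof. by case: a => ? ?; case: x => ? ?; case: y => ? ? /=; ring. Qed.

Lemma sol_lin f g (a : R[i]) : sol f -> sol g -> sol (fun j => a * f j + g j).
Proof.
move=> hf hg t; have [hf0 hf1] := hf t; have [hg0 hg1] := hg t.
have hre : forall j, complex.Re (a * f j + g j) =
   complex.Re a * complex.Re (f j) + (- complex.Im a) * complex.Im (f j) + complex.Re (g j).
  by move=> j; apply: ReMD.
have him : forall j, complex.Im (a * f j + g j) =
   complex.Im a * complex.Re (f j) + complex.Re a * complex.Im (f j) + complex.Im (g j).
  by move=> j; apply: ImMD.
have [ex ey] := gx_lin w F t hre; have [ex' ey'] := gx_lin w F t him.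
rewrite /X0 /X1 ex ey ex' ey' X0_lin X1_lin.
by rewrite /X0 /X1 in hf0 hf1 hg0 hg1; rewrite hf0 hf1 hg0 hg1 !mulr0 !subrr addr0 add0r.
Qed.

Lemma sol_const (z : R[i]) : sol (fun _ => z).
Proof.
move=> t; have [e1 e2] := @gx_const _ _ _ w F t (fun _ => complex.Re z) _ (fun _ => erefl).
have [e3 e4] := @gx_const _ _ _ w F t (fun _ => complex.Im z) _ (fun _ => erefl).
by rewrite /X0 /X1 e1 e2 e3 e4 /PG0 /PG1; split; ring.
Qed.

Lemma face_const f t (j1 j2 : 'I_3) : 0 < signed_area w F t -> `|mu t| < 1 -> sol f ->
  j1 != j2 -> f (F t j1) = f (F t j2) -> forall k, f (F t k) = f (F t j1).
Proof.
move=> hA hmu hs hne heq k.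
have hD := Dt_nz hA.
have [h0 h1] := hs t; rewrite /X0 /X1 /PG0 /PG1 in h0 h1.
have hc : cP (mu t) != 0.
  by rewrite /cP invr_eq0 gt_eqF // sqrtr_gt0 mu_bound.
have hab : forall (a : 'I_n -> R), a (F t j1) = a (F t j2) ->
    (xc w F t j2 - xc w F t j1) * gx w F t a + (yc w F t j2 - yc w F t j1) * gy w F t a = 0.
  move=> a ha.
  have -> : (xc w F t j2 - xc w F t j1) * gx w F t a + (yc w F t j2 - yc w F t j1) * gy w F t a
     = ((xc w F t j2 - xc w F t 0) * gx w F t a + (yc w F t j2 - yc w F t 0) * gy w F t a)
       - ((xc w F t j1 - xc w F t 0) * gx w F t a + (yc w F t j1 - yc w F t 0) * gy w F t a) by ring.
  by rewrite !gp // ha; ring.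
have hu := hab (fun j => complex.Re (f j)) (congr1 (@complex.Re R) heq).
have hv := hab (fun j => complex.Im (f j)) (congr1 (@complex.Im R) heq).
have hne' : val j1 != val j2 by [].
have [gu0 gu1 gv0 gv1] := core2D hc (mu_bound hmu) (e_nz hD hne') hu hv h0 h1.
have hcst : forall (a : 'I_n -> R), gx w F t a = 0 -> gy w F t a = 0 -> forall k, a (F t k) = vl F a t 0.
  move=> a ga gb k'; have := gp a k' hD; rewrite ga gb !mulr0 addr0 => /esym/eqP.
  by rewrite subr_eq0 => /eqP.
apply: cplx_ext.
  by rewrite (hcst _ gu0 gu1 k) (hcst _ gu0 gu1 j1).
by rewrite (hcst _ gv0 gv1 k) (hcst _ gv0 gv1 j1).
Qed.

Lemma propagate f t0 z : (forall t, 0 < signed_area w F t) -> (forall t, `|mu t| < 1) -> sol f ->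
  (forall t1 t2, connect (edge_adj F) t1 t2) -> (forall k, f (F t0 k) = z) ->
  forall t k, f (F t k) = z.
Proof.
move=> hA hmu hs hc h0 t; have := hc t0 t; case/connectP => p pth ->.
elim: p t0 pth h0 => [|t1 p IH] t0 /=; first by [].
case/andP => hadj pth h0; apply: IH pth _.
move: hadj => /existsP [i1 /existsP [i2 /existsP [j1 /existsP [j2 /and3P [hi /eqP e1 /eqP e2]]]]].
have hj : j1 != j2.
  apply/negP => /eqP hj; rewrite hj -e2 in e1.
  by move: hi; rewrite (F_inj (hA t0) e1) eqxx.
have hf : f (F t1 j1) = f (F t1 j2) by rewrite -e1 -e2 !h0.
move=> k; rewrite (face_const (hA t1) (hmu t1) hs hj hf k).
by rewrite -e1 h0.
Qed.

End S4.

From Stdlib Require Classical_Prop.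

Lemma ReC (R : rcfType) (x y : R) : complex.Re ((x%:C + 'i * y%:C)%C : R[i]) = x.
Proof. by rewrite /=; ring. Qed.
Lemma ImC (R : rcfType) (x y : R) : complex.Im ((x%:C + 'i * y%:C)%C : R[i]) = y.
Proof. by rewrite /=; ring. Qed.

Theorem theorem4p1 (R : rcfType) (n m : nat) (w : 'I_n -> R[i])
    (F : 'I_m -> 'I_3 -> 'I_n) (mu : 'I_m -> R[i]) :
  planar_mesh w F ->
  (forall t, `|mu t| < 1) ->
  exists f0 : 'I_n -> R[i],
    forall u v : 'I_n -> R,
      E_QC w F mu u v = 0 <->
      exists a b : R[i], forall j, ((u j)%:C + 'i * (v j)%:C)%C = a * f0 j + b.
Proof.
move=> [_ [hA [hcov [_ hconn]]]] hmu.
have hE : forall u v, E_QC w F mu u v = 0 <-> sol w F mu (fun j => ((u j)%:C + 'i * (v j)%:C)%C).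
  move=> u v; rewrite E_QC0 //; split.
    by apply: solUV_ext => j; rewrite ?ReC ?ImC.
  by apply: solUV_ext => j; rewrite ?ReC ?ImC.
have back : forall g, sol w F mu g -> forall u v,
    (exists a b : R[i], forall j, ((u j)%:C + 'i * (v j)%:C)%C = a * g j + b) ->
    E_QC w F mu u v = 0.
  move=> g hg u v [a [b hab]]; apply/hE.
  apply: (sol_ext (f := fun j => a * g j + (fun _ => b) j)); first by move=> j; rewrite hab.
  exact: sol_lin hg (sol_const _ _ _ b).
have ord01 : (ord0 : 'I_3) != ord_max by [].
case: (Classical_Prop.classic (exists g, sol w F mu g /\ exists t0, g (F t0 ord0) != g (F t0 ord_max))).
  move=> [g [hg [t0 hne]]]; exists g => u v; split; last exact: back.
  move/hE => hh.
  set h := (fun j => _) in hh.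
  set d := g (F t0 ord_max) - g (F t0 ord0).
  have hd : d != 0 by rewrite subr_eq0 eq_sym.
  set a := (h (F t0 ord_max) - h (F t0 ord0)) / d.
  set b := h (F t0 ord0) - a * g (F t0 ord0).
  exists a, b.
  set k := fun j => (- a) * g j + (1 * h j + (fun _ => - b) j).
  have hk : sol w F mu k by apply: sol_lin hg (sol_lin _ hh (sol_const _ _ _ _)).
  have k0 : k (F t0 ord0) = 0 by rewrite /k /b /=; ring.
  have k1 : k (F t0 ord_max) = k (F t0 ord0).
    have e : a * d = h (F t0 ord_max) - h (F t0 ord0) by rewrite /a divfK.
    rewrite k0 /k /b /=.
    rewrite [RHS](_ : 0 = (h (F t0 ord_max) - h (F t0 ord0)) - a * d); last by rewrite e subrr.
    rewrite /d; ring.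
  have kf := face_const (hA t0) (hmu t0) hk ord01 (esym k1).
  have kall := propagate (z := 0) hA hmu hk hconn (fun k' => etrans (kf k') k0).
  move=> j; have [t [k' hj]] := hcov j.
  have := kall t k'; rewrite hj /k /= => hz.
  apply/eqP; rewrite -subr_eq0; apply/eqP; rewrite -[RHS]hz; rewrite /h; ring.
move=> hn; exists (fun _ => 0) => u v; split; last by apply: back; apply: sol_const.
move/hE => hh.
set h := (fun j => _) in hh.
case: (pickP (fun _ : 'I_n => true)) => [j0 _ | hnone]; last first.
  by exists 0, 0 => j; have := hnone j.
have [t0 [k0 _]] := hcov j0.
have heq : h (F t0 ord0) = h (F t0 ord_max).
  apply: Classical_Prop.NNPP => hneq; apply: hn; exists h; split => //; exists t0.
  by apply/eqP.
have kf := face_const (hA t0) (hmu t0) hh ord01 heq.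
have kall := propagate hA hmu hh hconn kf.
exists 0, (h (F t0 ord0)) => j; have [t [k' <-]] := hcov j.
by rewrite mul0r add0r -(kall t k').
Qed.
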